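(* Let $\Phi:S_{m,n}\to S_{m',n'}$ be an affine isomorphism. Let $\omega_1\ne\omega_2$ be pure states in $K_m$ and $\sigma_1\neq\sigma_2$ pure states in $K_n$. Then there do not exist pure states $\rho_1,\rho_2,\rho_3\in\partial_eK_{m'}$ and $\tau_1,\tau_2,\tau_3\in\partial_eK_{n'}$ such that simultaneously $\Phi(\omega_1\otimes\sigma_1)=\rho_1\otimes\tau_1$, $\Phi(\omega_1\otimes\sigma_2)=\rho_1\otimes\tau_2$, $\Phi(\omega_2\otimes\sigma_1)=\rho_2\otimes\tau_3$, and $\Phi(\omega_2\otimes\sigma_2)=\rho_3\otimes\tau_3$.
   Context: $K_p$ denotes the state space of $\mathcal{B}(\mathbb{C}^p)$; $K_{m,n}$ the state space of $\mathcal{B}(\mathbb{C}^m\otimes\mathbb{C}^n)\cong\mathcal{B}(\mathbb{C}^m)\otimes\mathcal{B}(\mathbb{C}^n)$; $S_{m,n}\subseteq K_{m,n}$ the convex set of separable states (convex combinations of product states $\omega\otimes\sigma$, $\omega\in K_m$, $\sigma\in K_n$). $\partial_eC$ denotes the set of extreme points of a convex set $C$. An affine isomorphism is a bijection preserving convex combinations. *)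

(* Defs.v *)
From HB Require Import structures.
From mathcomp Require Import all_boot all_order all_algebra.
Set Implicit Arguments. Unset Strict Implicit. Unset Printing Implicit Defensive.
Import Order.TTheory GRing.Theory Num.Theory.
Local Open Scope ring_scope.

Section QDefs.
Variable C : numClosedFieldType.

Definition adjmx m n (A : 'M[C]_(m, n)) : 'M[C]_(n, m) :=
  \matrix_(i, j) (A j i)^*.

Definition psd p (A : 'M[C]_p) : Prop :=
  adjmx A = A /\ forall x : 'rV[C]_p, 0 <= (x *m A *m adjmx x) 0 0.

Definition is_state p (A : 'M[C]_p) : Prop := psd A /\ \tr A = 1.

Definition extreme_point (V : lmodType C) (X : V -> Prop) (x : V) : Prop :=
  X x /\ forall y z (t : C), X y -> X z -> 0 < t < 1 ->
    x = t *: y + (1 - t) *: z -> y = x /\ z = x.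

Definition pure_state p (A : 'M[C]_p) : Prop := extreme_point (@is_state p) A.

(* identification C^m (x) C^n = C^(m*n), compatible with mxvec_index *)
Definition tidx m n (k : 'I_(m * n)) : 'I_m * 'I_n :=
  enum_val (cast_ord (esym (mxvec_cast m n)) k).

Definition kron m n (A : 'M[C]_m) (B : 'M[C]_n) : 'M[C]_(m * n) :=
  \matrix_(k, l) (A (tidx k).1 (tidx l).1 * B (tidx k).2 (tidx l).2).

Definition separable m n (X : 'M[C]_(m * n)) : Prop :=
  exists (k : nat) (w : 'I_k -> C) (a : 'I_k -> 'M[C]_m) (b : 'I_k -> 'M[C]_n),
    (forall i, 0 <= w i) /\ \sum_i w i = 1 /\
    (forall i, is_state (a i) /\ is_state (b i)) /\
    X = \sum_i w i *: kron (a i) (b i).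

Definition affine_iso_sep m n m' n' (Phi : 'M[C]_(m * n) -> 'M[C]_(m' * n')) : Prop :=
  (forall X, separable X -> separable (Phi X)) /\
  (forall X Y, separable X -> separable Y -> Phi X = Phi Y -> X = Y) /\
  (forall Y, separable Y -> exists2 X, separable X & Phi X = Y) /\
  (forall X Y (t : C), separable X -> separable Y -> 0 <= t <= 1 ->
     Phi (t *: X + (1 - t) *: Y) = t *: Phi X + (1 - t) *: Phi Y).

End QDefs.

(* Main.v *)
Require Import Defs.
From HB Require Import structures.
From mathcomp Require Import all_boot all_order all_algebra.
From Stdlib Require Import Ring Classical.
Set Implicit Arguments. Unset Strict Implicit. Unset Printing Implicit Defensive.
Import Order.TTheory GRing.Theory Num.Theory.
Local Open Scope ring_scope.

Section S.
Variable C : numClosedFieldType.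
Definition CT := Num.ClosedField.sort C.
Definition cadd (x y : CT) : CT := x + y.
Definition cmul (x y : CT) : CT := x * y.
Definition copp (x : CT) : CT := - x.
Definition csub (x y : CT) : CT := x - y.
Definition c0 : CT := 0.
Definition c1 : CT := 1.
Lemma Cring : @ring_theory CT c0 c1 cadd cmul csub copp eq.
Proof.
split; rewrite /cadd/cmul/csub/copp/c0/c1 //=.
- exact: add0r.
- exact: addrC.
- exact: addrA.
- exact: mul1r.
- exact: mulrC.
- exact: mulrA.
- exact: mulrDl.
- exact: subrr.
Qed.
Add Ring Cring : Cring.
Lemma caddE (x y : C) : x + y = cadd x y. Proof. by []. Qed.
Lemma cmulE (x y : C) : x * y = cmul x y. Proof. by []. Qed.
Lemma coppE (x : C) : - x = copp x. Proof. by []. Qed.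
Lemma c0E : 0 = c0 :> C. Proof. by []. Qed.
Lemma c1E : 1 = c1 :> C. Proof. by []. Qed.
Lemma eqC_helper (x y : CT) : x = y -> x = y. Proof. by []. Qed.
Ltac cring := apply: eqC_helper; rewrite ?mulrS ?mulr0n ?expr2 ?exprS ?expr0 ?caddE ?cmulE ?coppE ?c0E ?c1E; ring.

Lemma adjmxE m n (A : 'M[C]_(m,n)) : adjmx A = (map_mx Num.conj_op A)^T.
Proof. by apply/matrixP=> i j; rewrite !mxE. Qed.

Lemma adjmxK m n (A : 'M[C]_(m,n)) : adjmx (adjmx A) = A.
Proof. by apply/matrixP=> i j; rewrite !mxE conjCK. Qed.

Lemma adjmxM m n p (A : 'M[C]_(m,n)) (B : 'M[C]_(n,p)) :
  adjmx (A *m B) = adjmx B *m adjmx A.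
Proof. by rewrite !adjmxE map_mxM trmx_mul. Qed.

Lemma adjmxD m n (A B : 'M[C]_(m,n)) : adjmx (A + B) = adjmx A + adjmx B.
Proof. by apply/matrixP=> i j; rewrite !mxE rmorphD. Qed.

Lemma adjmxZ m n a (A : 'M[C]_(m,n)) : adjmx (a *: A) = a^* *: adjmx A.
Proof. by apply/matrixP=> i j; rewrite !mxE rmorphM. Qed.

Lemma adjmxN m n (A : 'M[C]_(m,n)) : adjmx (- A) = - adjmx A.
Proof. by apply/matrixP=> i j; rewrite !mxE rmorphN. Qed.

Definition fm n (A : 'M[C]_n) (p q : 'rV[C]_n) : C := (p *m A *m adjmx q) 0 0.
Definition dt n (p q : 'rV[C]_n) : C := (p *m adjmx q) 0 0.
Definition P n (u : 'rV[C]_n) : 'M[C]_n := adjmx u *m u.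

Lemma mx11C (M : 'M[C]_1) : (adjmx M) 0 0 = (M 0 0)^*.
Proof. by rewrite mxE. Qed.

Lemma dtC n (p q : 'rV[C]_n) : dt q p = (dt p q)^*.
Proof. by rewrite /dt -mx11C adjmxM adjmxK. Qed.

Lemma fmC n (A : 'M[C]_n) p q : adjmx A = A -> fm A q p = (fm A p q)^*.
Proof. by move=> hA; rewrite /fm -mx11C !adjmxM adjmxK hA mulmxA. Qed.

Lemma fmDl n (A : 'M[C]_n) p p' q : fm A (p + p') q = fm A p q + fm A p' q.
Proof. by rewrite /fm !mulmxDl mxE. Qed.
Lemma fmZl n (A : 'M[C]_n) a p q : fm A (a *: p) q = a * fm A p q.
Proof. by rewrite /fm -!scalemxAl mxE. Qed.
Lemma fmNl n (A : 'M[C]_n) p q : fm A (- p) q = - fm A p q.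
Proof. by rewrite /fm !mulNmx mxE. Qed.
Lemma fmDr n (A : 'M[C]_n) p q q' : fm A p (q + q') = fm A p q + fm A p q'.
Proof. by rewrite /fm adjmxD mulmxDr mxE. Qed.
Lemma fmZr n (A : 'M[C]_n) a p q : fm A p (a *: q) = a^* * fm A p q.
Proof. by rewrite /fm adjmxZ -scalemxAr mxE. Qed.
Lemma fmNr n (A : 'M[C]_n) p q : fm A p (- q) = - fm A p q.
Proof. by rewrite /fm adjmxN mulmxN mxE. Qed.
Lemma fmDm n (A B : 'M[C]_n) p q : fm (A + B) p q = fm A p q + fm B p q.
Proof. by rewrite /fm mulmxDr mulmxDl mxE. Qed.
Lemma fmZm n (A : 'M[C]_n) a p q : fm (a *: A) p q = a * fm A p q.
Proof. by rewrite /fm -scalemxAr -scalemxAl mxE. Qed.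
Lemma fmNm n (A : 'M[C]_n) p q : fm (- A) p q = - fm A p q.
Proof. by rewrite /fm mulmxN mulNmx mxE. Qed.
Lemma fmBm n (A B : 'M[C]_n) p q : fm (A - B) p q = fm A p q - fm B p q.
Proof. by rewrite fmDm fmNm. Qed.
Lemma fm_sum n I (r : seq I) (F : I -> 'M[C]_n) p q :
  fm (\sum_(i <- r) F i) p q = \sum_(i <- r) fm (F i) p q.
Proof.
by rewrite /fm mulmx_sumr mulmx_suml summxE.
Qed.

Lemma fmP n (u : 'rV[C]_n) p q : fm (P u) p q = dt p u * dt u q.
Proof.
rewrite /fm /P /dt mulmxA -(mulmxA (p *m adjmx u)).
by rewrite [in LHS]mxE big_ord1.
Qed.

Lemma dtDl n (p p' q : 'rV[C]_n) : dt (p + p') q = dt p q + dt p' q.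
Proof. by rewrite /dt mulmxDl mxE. Qed.
Lemma dtZl n a (p q : 'rV[C]_n) : dt (a *: p) q = a * dt p q.
Proof. by rewrite /dt -scalemxAl mxE. Qed.
Lemma dtNl n (p q : 'rV[C]_n) : dt (- p) q = - dt p q.
Proof. by rewrite /dt mulNmx mxE. Qed.
Lemma dtDr n (p q q' : 'rV[C]_n) : dt p (q + q') = dt p q + dt p q'.
Proof. by rewrite /dt adjmxD mulmxDr mxE. Qed.
Lemma dtZr n a (p q : 'rV[C]_n) : dt p (a *: q) = a^* * dt p q.
Proof. by rewrite /dt adjmxZ -scalemxAr mxE. Qed.
Lemma dtNr n (p q : 'rV[C]_n) : dt p (- q) = - dt p q.
Proof. by rewrite /dt adjmxN mulmxN mxE. Qed.

Lemma dtE n (p q : 'rV[C]_n) : dt p q = \sum_i p 0 i * (q 0 i)^*.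
Proof. by rewrite /dt mxE; apply: eq_bigr => i _; rewrite mxE. Qed.

Lemma dt_ge0 n (p : 'rV[C]_n) : 0 <= dt p p.
Proof. by rewrite dtE sumr_ge0 // => i _; rewrite -normCK exprn_ge0. Qed.

Lemma dt_eq0 n (p : 'rV[C]_n) : dt p p = 0 -> p = 0.
Proof.
rewrite dtE => /eqP; rewrite psumr_eq0 => [/allP H|i _]; last by rewrite -normCK exprn_ge0.
apply/rowP=> i; rewrite mxE; have := H i (mem_index_enum _).
by rewrite -normCK expf_eq0 /= normr_eq0 => /eqP.
Qed.

Lemma trP n (u : 'rV[C]_n) : \tr (P u) = dt u u.
Proof. by rewrite /P mxtrace_mulC trace_mx11. Qed.


Lemma conjM (x y : C) : (x * y)^* = x^* * y^*. Proof. exact: rmorphM. Qed.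
Lemma conjD (x y : C) : (x + y)^* = x^* + y^*. Proof. exact: rmorphD. Qed.
Lemma conjN (x : C) : (- x)^* = - x^*. Proof. exact: rmorphN. Qed.
Lemma conjB (x y : C) : (x - y)^* = x^* - y^*. Proof. exact: rmorphB. Qed.

Lemma fm_exp2 n (A : 'M[C]_n) (a b : C) p q :
  fm A (a *: p + b *: q) (a *: p + b *: q) =
  a * a^* * fm A p p + a * b^* * fm A p q + b * a^* * fm A q p + b * b^* * fm A q q.
Proof. rewrite fmDl !fmDr !fmZl !fmZr; cring. Qed.

Lemma psd_herm n (A : 'M[C]_n) : psd A -> adjmx A = A.
Proof. by case. Qed.
Lemma psd_ge0 n (A : 'M[C]_n) p : psd A -> 0 <= fm A p p.
Proof. by case=> _; apply. Qed.

Lemma fm_real n (A : 'M[C]_n) p : adjmx A = A -> (fm A p p)^* = fm A p p.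
Proof. by move=> h; rewrite -fmC. Qed.

Lemma fm_rad n (A : 'M[C]_n) p q : psd A -> fm A q q = 0 -> fm A p q = 0.
Proof.
move=> hA hq; apply/eqP; apply/negPn/negP => hb.
set a := fm A p p; set b := fm A p q.
have hnb : 0 < b * b^* by rewrite -normCK exprn_gt0 // normr_gt0.
have ca : a^* = a by rewrite fm_real // psd_herm.
have e1 : (2 * (b * b^*))^* = 2 * (b * b^*) by rewrite geC0_conj // mulr_ge0 // ltW.
have e2 : (- ((a + 1) * b))^* = - ((a + 1) * b^*) by rewrite conjN conjM conjD ca conjC1.
have e3 : fm A q p = b^* by rewrite (fmC _ _ (psd_herm hA)).
have := psd_ge0 (2 * (b * b^*) *: p + (- ((a + 1) * b)) *: q) hA.
rewrite fm_exp2 hq e3 e1 e2 -/a -/b.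
have -> : 2 * (b * b^*) * (2 * (b * b^*)) * a + 2 * (b * b^*) * - ((a + 1) * b^*) * b +
   - ((a + 1) * b) * (2 * (b * b^*)) * b^* + - ((a + 1) * b) * - ((a + 1) * b^*) * 0
   = - (4 * (b * b^*) * (b * b^*)) by cring.
rewrite oppr_ge0 => h.
have h4 : 0 < 4 * (b * b^*) * (b * b^*).
  by apply: mulr_gt0 => //; apply: mulr_gt0.
by have := lt_le_trans h4 h; rewrite ltxx.
Qed.

Lemma CS n (A : 'M[C]_n) p q : psd A ->
  fm A p q * (fm A p q)^* <= fm A p p * fm A q q.
Proof.
move=> hA; set a := fm A p p; set b := fm A p q; set c := fm A q q.
have c0 : 0 <= c by apply: psd_ge0.
have [cz|cpos] := eqVneq c 0.
  by rewrite /b fm_rad // cz conjC0 !mulr0.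
have cgt : 0 < c by rewrite lt_def cpos c0.
have := psd_ge0 (c *: p + (- b) *: q) hA.
have e3 : fm A q p = b^* by rewrite (fmC _ _ (psd_herm hA)).
rewrite fm_exp2 e3 -/a -/b -/c.
have cc : c^* = c by rewrite fm_real // psd_herm.
rewrite !(conjM, conjN) cc.
have -> : c * c * a + c * - b^* * b + - b * c * b^* + - b * - b^* * c
   = c * (a * c - b * b^*) by cring.
by rewrite pmulr_rge0 // subr_ge0.
Qed.

Lemma fm_delta n (A : 'M[C]_n) i j : fm A (delta_mx 0 i) (delta_mx 0 j) = A i j.
Proof.
rewrite /fm -rowE mxE (bigD1 j) //= big1 => [|k hk]; rewrite !mxE ?eqxx.
  by rewrite conjC1 mulr1 addr0.
by rewrite (negbTE hk) andbF conjC0 mulr0.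
Qed.

Lemma fm_ext n (A B : 'M[C]_n) : (forall p q, fm A p q = fm B p q) -> A = B.
Proof. by move=> h; apply/matrixP=> i j; rewrite -!fm_delta h. Qed.

Lemma psd_diag n (A : 'M[C]_n) i : psd A -> 0 <= A i i.
Proof. by move=> hA; rewrite -fm_delta psd_ge0. Qed.

Lemma psd_tr_ge0 n (A : 'M[C]_n) : psd A -> 0 <= \tr A.
Proof. by move=> hA; rewrite /mxtrace sumr_ge0 // => i _; apply: psd_diag. Qed.

Lemma psd_tr0 n (A : 'M[C]_n) : psd A -> \tr A = 0 -> A = 0.
Proof.
move=> hA /eqP; rewrite /mxtrace psumr_eq0 => [/allP H|i _]; last exact: psd_diag.
apply/matrixP=> i j; rewrite mxE -fm_delta fm_rad //.
by rewrite fm_delta; apply/eqP; apply: H; rewrite mem_index_enum.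
Qed.

Lemma adjP n (u : 'rV[C]_n) : adjmx (P u) = P u.
Proof. by rewrite /P adjmxM adjmxK. Qed.

Lemma psdP n (u : 'rV[C]_n) : psd (P u).
Proof.
split; first exact: adjP.
by move=> x; rewrite -/(fm _ x x) fmP dtC -normCKC exprn_ge0.
Qed.

Lemma psdD n (A B : 'M[C]_n) : psd A -> psd B -> psd (A + B).
Proof.
move=> hA hB; split; first by rewrite adjmxD !psd_herm.
by move=> x; rewrite -/(fm _ x x) fmDm addr_ge0 // psd_ge0.
Qed.

Lemma psdZ n (A : 'M[C]_n) a : 0 <= a -> psd A -> psd (a *: A).
Proof.
move=> ha hA; split; first by rewrite adjmxZ geC0_conj // psd_herm.
by move=> x; rewrite -/(fm _ x x) fmZm mulr_ge0 // psd_ge0.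
Qed.

Section Schur.
Variables (n : nat) (A : 'M[C]_n) (e : 'rV[C]_n).
Hypothesis hA : psd A.
Let c := fm A e e.
Hypothesis hc : 0 < c.
Definition schur : 'M[C]_n := c^-1 *: P (e *m A).

Lemma fm_schur p q : fm schur p q = c^-1 * (fm A p e * fm A e q).
Proof.
rewrite /schur fmZm fmP /dt /fm adjmxM (psd_herm hA) mulmxA.
by [].
Qed.

Lemma psd_schur : psd schur.
Proof. by apply: psdZ; [rewrite invr_ge0 ltW | apply: psdP]. Qed.

Lemma psd_schur_rest : psd (A - schur).
Proof.
split.
  rewrite adjmxD adjmxN (psd_herm hA) (psd_herm psd_schur) //.
move=> x; rewrite -/(fm _ x x) fmBm fm_schur subr_ge0.
rewrite (fmC x e (psd_herm hA)) -(ler_pM2l hc) mulrA mulfV ?mul1r; last by rewrite gt_eqF.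
by rewrite [c * _]mulrC; apply: CS.
Qed.

Lemma schur_tr_gt0 : 0 < \tr schur.
Proof.
rewrite /schur mxtraceZ trP mulr_gt0 ?invr_gt0 // lt_def dt_ge0 andbT.
apply/eqP=> /dt_eq0 h0; move: hc; rewrite /c /fm h0 mul0mx mxE.
by rewrite ltxx.
Qed.
End Schur.

Lemma mxtraceB n (A B : 'M[C]_n) : \tr (A - B) = \tr A - \tr B.
Proof. by rewrite mxtraceD -scaleN1r mxtraceZ mulN1r. Qed.

Lemma P_scale n (s : C) (g : 'rV[C]_n) : 0 <= s -> s *: P g = P (sqrtC s *: g).
Proof.
move=> hs; rewrite /P adjmxZ -scalemxAl -scalemxAr scalerA.
by rewrite geC0_conj ?sqrtC_ge0 // -expr2 sqrtCK.
Qed.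

Lemma state_decomp n (A B : 'M[C]_n) (t : C) : is_state A -> psd B -> psd (A - B) ->
  \tr B = t -> 0 < t < 1 ->
  [/\ is_state (t^-1 *: B), is_state ((1 - t)^-1 *: (A - B)) &
      A = t *: (t^-1 *: B) + (1 - t) *: ((1 - t)^-1 *: (A - B))].
Proof.
move=> [hA trA] hB hAB trB /andP[t0 t1].
have t0' : t != 0 by rewrite gt_eqF.
have t1' : 1 - t != 0 by rewrite subr_eq0 eq_sym lt_eqF.
split.
- split; first by apply: psdZ => //; rewrite invr_ge0 ltW.
  by rewrite mxtraceZ trB mulVf.
- split; first by apply: psdZ => //; rewrite invr_ge0 subr_ge0 ltW.
  by rewrite mxtraceZ mxtraceB trA trB mulVf.
by rewrite !scalerA !mulfV // !scale1r addrC subrK.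
Qed.

Lemma pure_rank1 n (A : 'M[C]_n) : pure_state A -> exists u, A = P u /\ dt u u = 1.
Proof.
move=> [[hA trA] hext].
have [i hi] : exists i, A i i != 0.
  case: (pickP [pred i | A i i != 0]) => [i hi | h]; first by exists i.
  move: trA; rewrite /mxtrace big1 => [/esym/eqP|j _]; first by rewrite oner_eq0.
  by apply/eqP; move: (h j) => /= /negbFE.
set e := delta_mx 0 i : 'rV[C]_n.
have hc : 0 < fm A e e by rewrite /e fm_delta lt_def hi psd_diag.
suff [s [hs hAs]] : exists s, 0 <= s /\ A = s *: P (e *m A).
  exists (sqrtC s *: (e *m A)); split; first by rewrite -P_scale.
  by rewrite -trP -P_scale // -hAs trA.
have ht := schur_tr_gt0 hc.
have ht1 : \tr (schur A e) <= 1.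
  by rewrite -trA -subr_ge0 -mxtraceB; apply: psd_tr_ge0; apply: psd_schur_rest.
have [t1|tn1] := eqVneq (\tr (schur A e)) 1.
  exists (fm A e e)^-1; split; first by rewrite invr_ge0 ltW.
  apply/eqP; rewrite -subr_eq0 -/(schur A e); apply/eqP; apply: psd_tr0.
    exact: psd_schur_rest.
  by rewrite mxtraceB t1 trA subrr.
have htt : 0 < \tr (schur A e) < 1 by rewrite ht /= lt_neqAle tn1 ht1.
have [hN hN' hdec] := state_decomp (conj hA trA) (psd_schur hc) (psd_schur_rest hA hc)
  (erefl _) htt.
have [hNA _] := hext _ _ _ hN hN' htt hdec.
exists ((\tr (schur A e))^-1 * (fm A e e)^-1); split.
  by rewrite mulr_ge0 // invr_ge0 ltW.
by rewrite -[LHS]hNA /schur scalerA.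
Qed.

Definition tinv m n (ij : 'I_m * 'I_n) : 'I_(m * n) :=
  cast_ord (mxvec_cast m n) (enum_rank ij).

Lemma tidx_tinv m n ij : tidx (tinv ij) = ij :> 'I_m * 'I_n.
Proof. by rewrite /tidx /tinv cast_ordK enum_rankK. Qed.

Lemma tinv_tidx m n k : tinv (tidx k) = k :> 'I_(m * n).
Proof. by rewrite /tidx /tinv enum_valK cast_ordKV. Qed.

Lemma kronE m n (A : 'M[C]_m) (B : 'M[C]_n) i j k l :
  kron A B (tinv (i, k)) (tinv (j, l)) = A i j * B k l.
Proof. by rewrite mxE !tidx_tinv. Qed.

Lemma sum_tidx m n (F : 'I_m -> 'I_n -> C) :
  \sum_(k : 'I_(m * n)) F (tidx k).1 (tidx k).2 = \sum_i \sum_j F i j.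
Proof.
rewrite (reindex (@tinv m n)) /=; last first.
  by exists (@tidx m n) => x _; [rewrite tidx_tinv | rewrite tinv_tidx].
rewrite pair_big /=; apply: eq_bigr => [[i j]] _ /=.
by rewrite tidx_tinv.
Qed.

Definition tv m n (g : 'rV[C]_m) (h : 'rV[C]_n) : 'rV[C]_(m * n) :=
  \row_k (g 0 (tidx k).1 * h 0 (tidx k).2).

Lemma fmE n (M : 'M[C]_n) p q :
  fm M p q = \sum_i \sum_j p 0 i * M i j * (q 0 j)^*.
Proof.
rewrite /fm mxE; under eq_bigr => j _ do rewrite !mxE big_distrl /=.
rewrite exchange_big /=; apply: eq_bigr => i _; by apply: eq_bigr => j _.
Qed.

Lemma fm_kron m n (A : 'M[C]_m) (B : 'M[C]_n) g h g' h' :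
  fm (kron A B) (tv g h) (tv g' h') = fm A g g' * fm B h h'.
Proof.
rewrite fmE.
under eq_bigr => k _ do under eq_bigr => l _ do rewrite !mxE.
rewrite (sum_tidx (fun i k => \sum_l (g 0 i * h 0 k * (A i (tidx l).1 * B k (tidx l).2) *
   (g' 0 (tidx l).1 * h' 0 (tidx l).2)^*))).
under eq_bigr => i _ do under eq_bigr => k _ do rewrite (sum_tidx (fun j l =>
   g 0 i * h 0 k * (A i j * B k l) * (g' 0 j * h' 0 l)^*)).
rewrite !fmE big_distrl /=; apply: eq_bigr => i _.
rewrite big_distrl /= exchange_big /=; apply: eq_bigr => j _.
rewrite mulr_sumr; apply: eq_bigr => k _.
rewrite mulr_sumr; apply: eq_bigr => l _.
rewrite conjM; cring.
Qed.

Lemma kronZr m n (A : 'M[C]_m) (B : 'M[C]_n) a : kron A (a *: B) = a *: kron A B.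
Proof. by apply/matrixP=> i j; rewrite !mxE mulrCA. Qed.
Lemma kronDr m n (A : 'M[C]_m) (B B' : 'M[C]_n) : kron A (B + B') = kron A B + kron A B'.
Proof. by apply/matrixP=> i j; rewrite !mxE mulrDr. Qed.
Lemma kronZl m n (A : 'M[C]_m) (B : 'M[C]_n) a : kron (a *: A) B = a *: kron A B.
Proof. by apply/matrixP=> i j; rewrite !mxE mulrA. Qed.
Lemma kronDl m n (A A' : 'M[C]_m) (B : 'M[C]_n) : kron (A + A') B = kron A B + kron A' B.
Proof. by apply/matrixP=> i j; rewrite !mxE mulrDl. Qed.

Lemma kron_injl m n (A A' : 'M[C]_m) (B B' : 'M[C]_n) :
  \tr B = 1 -> \tr B' = 1 -> kron A B = kron A' B' -> A = A'.
Proof.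
move=> tB tB' h; apply/matrixP=> i j.
rewrite -[A i j]mulr1 -[A' i j]mulr1 -{1}tB -tB' /mxtrace !mulr_sumr.
by apply: eq_bigr => k _; rewrite -!kronE h.
Qed.

Lemma kron_injr m n (A A' : 'M[C]_m) (B B' : 'M[C]_n) :
  \tr A = 1 -> \tr A' = 1 -> kron A B = kron A' B' -> B = B'.
Proof.
move=> tA tA' h; apply/matrixP=> i j.
rewrite -[B i j]mul1r -[B' i j]mul1r -{1}tA -tA' /mxtrace !mulr_suml.
by apply: eq_bigr => k _; rewrite -!kronE h.
Qed.

Lemma sep2 m n (A A' : 'M[C]_m) (B B' : 'M[C]_n) (s : C) :
  is_state A -> is_state A' -> is_state B -> is_state B' -> 0 <= s <= 1 ->
  separable (s *: kron A B + (1 - s) *: kron A' B').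
Proof.
move=> hA hA' hB hB' /andP[s0 s1].
exists 2, (fun i : 'I_2 => if i == 0 then s else 1 - s),
  (fun i : 'I_2 => if i == 0 then A else A'), (fun i : 'I_2 => if i == 0 then B else B').
split; first by move=> i; case: (i == 0) => //; rewrite subr_ge0.
split; first by rewrite big_ord_recl big_ord1 /= subrKC.
split; first by move=> i; case: (i == 0).
by rewrite big_ord_recl big_ord1.
Qed.

Lemma sep1 m n (A : 'M[C]_m) (B : 'M[C]_n) :
  is_state A -> is_state B -> separable (kron A B).
Proof.
move=> hA hB; have := sep2 hA hA hB hB (_ : 0 <= 1 <= 1).
by rewrite scale1r subrr scale0r addr0 ler01 lexx; apply.
Qed.

Lemma dt_g n (M : 'M[C]_n) e p : adjmx M = M -> dt p (e *m M) = fm M p e.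
Proof. by move=> hM; rewrite /dt /fm adjmxM hM mulmxA. Qed.

Lemma P_scaleC n (c : C) (v : 'rV[C]_n) : P (c *: v) = (c^* * c) *: P v.
Proof. by rewrite /P adjmxZ -scalemxAl -scalemxAr scalerA. Qed.

Lemma nonpar n (v v' : 'rV[C]_n) : dt v v = 1 -> dt v' v' = 1 -> P v <> P v' ->
  1 - dt v v' * (dt v v')^* != 0.
Proof.
move=> hv hv' hne; apply/negP; rewrite subr_eq0 => /eqP h1.
set d := dt v v' in h1.
have hw : dt (v' - d^* *: v) (v' - d^* *: v) = 0.
  rewrite !(dtDl, dtDr, dtNl, dtNr, dtZl, dtZr) hv hv' conjCK.
  rewrite (dtC v v') -/d.
  have -> : 1 - d * d^* + (- (d^* * d) - d^* * - (d * 1)) = 1 - d * d^* by cring.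
  by rewrite -h1 subrr.
have := dt_eq0 hw; move/eqP; rewrite subr_eq0 => /eqP hv'v.
apply: hne; rewrite hv'v P_scaleC conjCK -h1 scale1r //.
Qed.

Lemma half1 : 1 - 2^-1 = 2^-1 :> C.
Proof. by rewrite {1}(splitr 1) mul1r addrK. Qed.

Lemma half_ge0 : 0 <= 2^-1 :> C.
Proof. by rewrite invr_ge0 ler0n. Qed.

Lemma seg_key n (v v' : 'rV[C]_n) (k s : C) :
  dt v v = 1 -> dt v' v' = 1 -> P v <> P v' -> k != 0 ->
  k *: P ((v + v') *m (2^-1 *: P v + (1 - 2^-1) *: P v')) <> s *: P v + (1 - s) *: P v'.
Proof.
move=> hv hv' hne hk H.
have hnp := nonpar hv hv' hne.
set d := dt v v' in hnp.
have hd' : dt v' v = d^* by rewrite (dtC v v').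
set M := 2^-1 *: P v + (1 - 2^-1) *: P v' in H.
have hM : adjmx M = M.
  by apply: psd_herm; apply: psdD; apply: psdZ; rewrite ?half1 ?half_ge0 //; apply: psdP.
set e := v + v' in H.
set p := v' - d^* *: v.
set q := v - d *: v'.
have dpv : dt p v = 0 by rewrite /p dtDl dtNl dtZl hv hd' mulr1 subrr.
have dpv' : dt p v' = 1 - d^* * d by rewrite /p dtDl dtNl dtZl hv'.
have dvq : dt v q = 1 - d^* * d by rewrite /q dtDr dtNr dtZr hv.
have dv'q : dt v' q = 0 by rewrite /q dtDr dtNr dtZr hv' hd' mulr1 subrr.
have dqv : dt q v = 1 - d * d^* by rewrite /q dtDl dtNl dtZl hv hd'.
have dqv' : dt q v' = 0 by rewrite /q dtDl dtNl dtZl hv' mulr1 subrr.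
have dve : dt v e = 1 + d by rewrite /e dtDr hv.
have dv'e : dt v' e = d^* + 1 by rewrite /e dtDr hv' hd'.
have hd1 : 1 + d != 0.
  apply/negP; rewrite addr_eq0 => /eqP hd; move: hnp.
  have hd0 : d = - 1 by rewrite hd opprK.
  by rewrite hd0 conjCN1 mulrNN mulr1 subrr eqxx.
have hd2 : d^* + 1 != 0 by rewrite addrC -conjC1 -conjD conjC_eq0.
have hd3 : 1 - d^* * d != 0 by rewrite mulrC.
have := congr1 (fun X => fm X p q) H.
rewrite /= fmZm fmP (dtC q) !dt_g // !fmDm !fmZm !fmP dpv dpv' dv'q dqv dqv' dve dv'e half1.
rewrite !mul0r !mulr0 !addr0 add0r.
apply/eqP; rewrite !mulf_neq0 // ?conjC_eq0 ?mulf_neq0 ?invr_eq0 ?pnatr_eq0 //.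
Qed.

Lemma one_plus_d n (v v' : 'rV[C]_n) : dt v v = 1 -> dt v' v' = 1 -> P v <> P v' ->
  1 + dt v v' != 0.
Proof.
move=> hv hv' hne; have hnp := nonpar hv hv' hne.
set d := dt v v' in hnp *.
apply/negP; rewrite addr_eq0 => /eqP hd; move: hnp.
have hd0 : d = - 1 by rewrite hd opprK.
by rewrite hd0 conjCN1 mulrNN mulr1 subrr eqxx.
Qed.

Lemma split_mid n (v v' : 'rV[C]_n) : dt v v = 1 -> dt v' v' = 1 -> P v <> P v' ->
  exists N N' (t : C), [/\ is_state N, is_state N', 0 < t < 1,
    2^-1 *: P v + (1 - 2^-1) *: P v' = t *: N + (1 - t) *: N' &
    forall s, N <> s *: P v + (1 - s) *: P v'].
Proof.
move=> hv hv' hne.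
have hd1 := one_plus_d hv hv' hne.
set M := 2^-1 *: P v + (1 - 2^-1) *: P v'.
have hMp : psd M.
  by apply: psdD; apply: psdZ; rewrite ?half1 ?half_ge0 //; apply: psdP.
have hMt : \tr M = 1.
  by rewrite mxtraceD !mxtraceZ !trP hv hv' half1 !mulr1 {3}(splitr 1) mul1r.
set e := v + v'.
have hc : 0 < fm M e e.
  rewrite fmDm !fmZm !fmP half1 (dtC e v) (dtC e v').
  have h1 : dt e v != 0.
    by rewrite /e dtDl hv (dtC v v') -conjC1 -conjD conjC_eq0.
  have h2 : dt e v' != 0 by rewrite /e dtDl hv' addrC.
  by rewrite addr_gt0 // mulr_gt0 ?invr_gt0 ?ltr0n // -normCK exprn_gt0 // normr_gt0.
have ht := schur_tr_gt0 hc.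
have ht1 : \tr (schur M e) <= 1.
  by rewrite -hMt -subr_ge0 -mxtraceB; apply: psd_tr_ge0; apply: psd_schur_rest.
have tn1 : \tr (schur M e) != 1.
  apply/eqP => t1.
  have h0 : M - schur M e = 0.
    apply: psd_tr0; first exact: psd_schur_rest.
    by rewrite mxtraceB t1 hMt subrr.
  apply: (@seg_key n v v' (fm M e e)^-1 2^-1 hv hv' hne); first by rewrite invr_eq0 gt_eqF.
  by apply/esym/eqP; rewrite -subr_eq0 -/M; apply/eqP.
have htt : 0 < \tr (schur M e) < 1 by rewrite ht /= lt_neqAle tn1 ht1.
have [hN hN' hdec] := state_decomp (conj hMp hMt) (psd_schur hc) (psd_schur_rest hMp hc)
  (erefl _) htt.
exists ((\tr (schur M e))^-1 *: schur M e), ((1 - \tr (schur M e))^-1 *: (M - schur M e)),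
  (\tr (schur M e)); split => //.
move=> s; rewrite /schur scalerA.
apply: seg_key => //.
by rewrite mulf_neq0 // invr_eq0 gt_eqF.
Qed.

Lemma kernel_P n (A : 'M[C]_n) (u : 'rV[C]_n) : is_state A -> dt u u = 1 ->
  (forall g, dt g u = 0 -> fm A g g = 0) -> A = P u.
Proof.
move=> [hA trA] hu H.
have hg : forall p, dt (p - dt p u *: u) u = 0.
  by move=> p; rewrite dtDl dtNl dtZl hu mulr1 subrr.
have r1 : forall p x, fm A x (p - dt p u *: u) = 0.
  by move=> p x; apply: fm_rad => //; apply: H.
have r2 : forall p x, fm A (p - dt p u *: u) x = 0.
  by move=> p x; rewrite (fmC _ _ (psd_herm hA)) r1 conjC0.
have key : forall p q, fm A p q = fm ((fm A u u) *: P u) p q.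
  move=> p q; rewrite fmZm fmP (dtC q u).
  have -> : fm A p q = fm A ((p - dt p u *: u) + dt p u *: u) ((q - dt q u *: u) + dt q u *: u).
    by rewrite !subrK.
  rewrite fmDl r2 add0r (fmDr _ _ (q - dt q u *: u)) fmZl r1 mulr0 add0r fmZl fmZr.
  cring.
have hAe := fm_ext key.
move: trA; rewrite hAe mxtraceZ trP hu mulr1 => ->.
by rewrite scale1r.
Qed.

Lemma sep_ge0 m n (Z : 'M[C]_(m * n)) g h : separable Z -> 0 <= fm Z (tv g h) (tv g h).
Proof.
move=> [k [w [a [b [hw [_ [hab ->]]]]]]].
rewrite fm_sum sumr_ge0 // => i _.
have [[ha _] [hb _]] := hab i.
by rewrite fmZm fm_kron mulr_ge0 // mulr_ge0 // psd_ge0.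
Qed.

Lemma disj_helper m n (A : 'M[C]_m) (B : 'M[C]_n) x y :
  is_state A -> is_state B -> dt x x = 1 -> dt y y = 1 ->
  (forall g h, dt g x = 0 -> dt h y = 0 -> fm A g g * fm B h h = 0) ->
  A = P x \/ B = P y.
Proof.
move=> hA hB hx hy H.
case: (classic (forall g, dt g x = 0 -> fm A g g = 0)) => H1.
  by left; apply: kernel_P.
right; apply: kernel_P => // h hh.
have [g Hg] := not_all_ex_not _ _ H1.
have [hg hng] := imply_to_and _ _ Hg.
have := H g h hg hh; move/eqP; rewrite mulf_eq0 => /orP [/eqP h0 | /eqP //].
by exfalso; apply: hng.
Qed.

Lemma fm_mid m n (u u' : 'rV[C]_m) (v v' : 'rV[C]_n) g h :
  fm (2^-1 *: kron (P u) (P v) + (1 - 2^-1) *: kron (P u') (P v')) (tv g h) (tv g h) =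
  2^-1 * ((dt g u * dt u g) * (dt h v * dt v h)) +
  (1 - 2^-1) * ((dt g u' * dt u' g) * (dt h v' * dt v' h)).
Proof. by rewrite fmDm !fmZm !fm_kron !fmP. Qed.

Lemma both_face m n (u u' : 'rV[C]_m) (v v' : 'rV[C]_n) (Z Z' : 'M[C]_(m * n)) (t : C) :
  dt u u = 1 -> dt u' u' = 1 -> dt v v = 1 -> dt v' v' = 1 -> P u <> P u' -> P v <> P v' ->
  separable Z -> separable Z' -> 0 < t < 1 ->
  2^-1 *: kron (P u) (P v) + (1 - 2^-1) *: kron (P u') (P v') = t *: Z + (1 - t) *: Z' ->
  exists2 s, 0 <= s <= 1 & Z = s *: kron (P u) (P v) + (1 - s) *: kron (P u') (P v').
Proof.
move=> hu hu' hv hv' nu nv hZ hZ' /andP[t0 t1] hmid.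
move: hZ => [k [w [a [b [hw [hw1 [hab hZe]]]]]]].
have zero : forall i g h, 0 < w i ->
    fm (2^-1 *: kron (P u) (P v) + (1 - 2^-1) *: kron (P u') (P v')) (tv g h) (tv g h) = 0 ->
    fm (a i) g g * fm (b i) h h = 0.
  move=> i g h wi; rewrite hmid fmDm !fmZm hZe fm_sum.
  have tnn : forall j, 0 <= fm (w j *: kron (a j) (b j)) (tv g h) (tv g h).
    move=> j; have [[ha _] [hb _]] := hab j.
    by rewrite fmZm fm_kron mulr_ge0 // mulr_ge0 // psd_ge0.
  move/eqP; rewrite paddr_eq0; first last.
  - by apply: mulr_ge0; [rewrite subr_ge0 ltW | exact: sep_ge0].
  - by apply: mulr_ge0; [exact: ltW | apply: sumr_ge0 => j _; exact: tnn].
  case/andP; rewrite mulf_eq0 gt_eqF //= psumr_eq0 => [/allP/(_ i (mem_index_enum _))|j _].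
    by rewrite fmZm fm_kron mulf_eq0 gt_eqF //= => /eqP.
  exact: tnn.
have cls : forall i, 0 < w i -> (a i = P u /\ b i = P v) \/ (a i = P u' /\ b i = P v').
  move=> i wi; have [ha hb] := hab i.
  have D1 : a i = P u \/ b i = P v'.
    apply: disj_helper => // g h hg hh; apply: zero => //.
    by rewrite fm_mid hg (dtC g u) hg (dtC h v') hh conjC0 !(mulr0, mul0r) addr0.
  have D2 : a i = P u' \/ b i = P v.
    apply: disj_helper => // g h hg hh; apply: zero => //.
    by rewrite fm_mid hg (dtC g u') hg (dtC h v) hh conjC0 !(mulr0, mul0r) addr0.
  case: D1 => [e1|e1]; case: D2 => [e2|e2].
  - by exfalso; apply: nu; rewrite -e1 -e2.
  - by left.
  - by right.
  - by exfalso; apply: nv; rewrite -e1 -e2.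
set X := kron (P u) (P v); set Y := kron (P u') (P v').
have nu' : (P u' == P u) = false by apply/eqP => h; apply: nu; rewrite h.
have hsplit : forall i, w i *: kron (a i) (b i) =
    (if a i == P u then w i else 0) *: X + (if a i == P u then 0 else w i) *: Y.
  move=> i; have := hw i; rewrite le_eqVlt => /orP [/eqP <- | wi].
    by case: ifP => _; rewrite !scale0r addr0.
  case: (cls i wi) => [[-> ->] | [-> ->]]; first by rewrite eqxx scale0r addr0.
  by rewrite nu' scale0r add0r.
set s := \sum_i (if a i == P u then w i else 0).
have hs1 : \sum_i (if a i == P u then 0 else w i) = 1 - s.
  rewrite -hw1 /s -sumrB; apply: eq_bigr => i _.
  by case: ifP => _; rewrite ?subr0 ?subrr.
exists s.
  apply/andP; split.
    by rewrite sumr_ge0 // => i _; case: ifP.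
  by rewrite -subr_ge0 -hs1 sumr_ge0 // => i _; case: ifP.
rewrite hZe (eq_bigr _ (fun i _ => hsplit i)) big_split /=.
by rewrite -!scaler_suml hs1.
Qed.

Lemma split_l k1 k2 (j : 'I_k1) : split (lshift k2 j) = inl j.
Proof.
case: split_ordP => [jj /lshift_inj -> //| jj /eqP]; by rewrite eq_lrshift.
Qed.
Lemma split_r k1 k2 (j : 'I_k2) : split (rshift k1 j) = inr j.
Proof.
case: split_ordP => [jj /eqP| jj /rshift_inj -> //]; by rewrite eq_rlshift.
Qed.

Definition sumf (T : Type) k1 k2 (f1 : 'I_k1 -> T) (f2 : 'I_k2 -> T) (i : 'I_(k1 + k2)) : T :=
  match split i with inl j => f1 j | inr j => f2 j end.
Lemma sumf_l T k1 k2 (f1 : 'I_k1 -> T) (f2 : 'I_k2 -> T) j : sumf f1 f2 (lshift k2 j) = f1 j.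
Proof. by rewrite /sumf split_l. Qed.
Lemma sumf_r T k1 k2 (f1 : 'I_k1 -> T) (f2 : 'I_k2 -> T) j : sumf f1 f2 (rshift k1 j) = f2 j.
Proof. by rewrite /sumf split_r. Qed.

Lemma sep_conv m n (X Y : 'M[C]_(m * n)) (t : C) :
  separable X -> separable Y -> 0 <= t <= 1 -> separable (t *: X + (1 - t) *: Y).
Proof.
move=> [k1 [w1 [a1 [b1 [hw1 [s1 [hab1 ->]]]]]]] [k2 [w2 [a2 [b2 [hw2 [s2 [hab2 ->]]]]]]].
move=> /andP[t0 t1].
exists (k1 + k2)%N, (sumf (fun j => t * w1 j) (fun j => (1 - t) * w2 j)),
  (sumf a1 a2), (sumf b1 b2).
split.
  move=> i; rewrite /sumf; case: (split i) => j; apply: mulr_ge0 => //; by rewrite subr_ge0.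
split.
  rewrite big_split_ord /=.
  under eq_bigr => j _ do rewrite sumf_l.
  under [X in _ + X]eq_bigr => j _ do rewrite sumf_r.
  by rewrite -!mulr_sumr s1 s2 !mulr1 subrKC.
split.
  by move=> i; rewrite /sumf; case: (split i) => j.
rewrite big_split_ord /= !scaler_sumr; congr (_ + _); apply: eq_bigr => j _.
  by rewrite !sumf_l scalerA.
by rewrite !sumf_r scalerA.
Qed.

Definition Q m n (X Y : 'M[C]_(m * n)) : Prop :=
  exists Z Z' (t : C), [/\ separable Z, separable Z', 0 < t < 1,
    2^-1 *: X + (1 - 2^-1) *: Y = t *: Z + (1 - t) *: Z' &
    forall s, 0 <= s <= 1 -> Z <> s *: X + (1 - s) *: Y].

Lemma Qone_l m n (A A' : 'M[C]_m) (B : 'M[C]_n) :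
  pure_state A -> pure_state A' -> A <> A' -> is_state B -> Q (kron A B) (kron A' B).
Proof.
move=> pA pA' nA hB.
have [u [eA hu]] := pure_rank1 pA; have [u' [eA' hu']] := pure_rank1 pA'.
rewrite eA eA' in nA *.
have [N [N' [t [hN hN' ht hdec hns]]]] := split_mid hu hu' nA.
exists (kron N B), (kron N' B), t; split => //.
- exact: sep1.
- exact: sep1.
- by rewrite -!kronZl -!kronDl hdec.
move=> s _ h; apply: (hns s); apply: (@kron_injl _ _ _ _ B B); try by case: hB.
by rewrite h kronDl !kronZl.
Qed.

Lemma Qone_r m n (A : 'M[C]_m) (B B' : 'M[C]_n) :
  pure_state B -> pure_state B' -> B <> B' -> is_state A -> Q (kron A B) (kron A B').
Proof.
move=> pB pB' nB hA.
have [u [eB hu]] := pure_rank1 pB; have [u' [eB' hu']] := pure_rank1 pB'.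
rewrite eB eB' in nB *.
have [N [N' [t [hN hN' ht hdec hns]]]] := split_mid hu hu' nB.
exists (kron A N), (kron A N'), t; split => //.
- exact: sep1.
- exact: sep1.
- by rewrite -!kronZr -!kronDr hdec.
move=> s _ h; apply: (hns s); apply: (@kron_injr _ _ A A); try by case: hA.
by rewrite h kronDr !kronZr.
Qed.

Lemma Qtwo m n (A A' : 'M[C]_m) (B B' : 'M[C]_n) :
  pure_state A -> pure_state A' -> A <> A' ->
  pure_state B -> pure_state B' -> B <> B' -> ~ Q (kron A B) (kron A' B').
Proof.
move=> pA pA' nA pB pB' nB.
have [u [eA hu]] := pure_rank1 pA; have [u' [eA' hu']] := pure_rank1 pA'.
have [v [eB hv]] := pure_rank1 pB; have [v' [eB' hv']] := pure_rank1 pB'.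
rewrite eA eA' eB eB' in nA nB *.
move=> [Z [Z' [t [hZ hZ' ht hdec hns]]]].
have [s hs hZe] := both_face hu hu' hv hv' nA nB hZ hZ' ht hdec.
exact: hns hs hZe.
Qed.

Lemma Q_fwd m n m' n' (Phi : 'M[C]_(m * n) -> 'M[C]_(m' * n')) (A A' : 'M[C]_m) (B B' : 'M[C]_n) :
  affine_iso_sep Phi -> is_state A -> is_state A' -> is_state B -> is_state B' ->
  Q (kron A B) (kron A' B') -> Q (Phi (kron A B)) (Phi (kron A' B')).
Proof.
move=> [hsep [hinj [hsurj haff]]] hA hA' hB hB' [Z [Z' [t [hZ hZ' /andP[t0 t1] hdec hns]]]].
have hX := sep1 hA hB; have hY := sep1 hA' hB'.
have h2 : 0 <= (2^-1 : C) <= 1 by rewrite half_ge0 /= -subr_ge0 half1 half_ge0.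
exists (Phi Z), (Phi Z'), t; split => //.
- exact: hsep.
- exact: hsep.
- by rewrite t0 t1.
- have htt : 0 <= t <= 1 by rewrite !ltW.
  by rewrite -(haff _ _ _ hX hY h2) -(haff _ _ _ hZ hZ' htt) hdec.
move=> s hs h; apply: (hns s hs); apply: hinj => //.
  exact: sep2.
by rewrite haff.
Qed.

Lemma Q_bwd m n m' n' (Phi : 'M[C]_(m * n) -> 'M[C]_(m' * n')) (A A' : 'M[C]_m) (B B' : 'M[C]_n) :
  affine_iso_sep Phi -> is_state A -> is_state A' -> is_state B -> is_state B' ->
  Q (Phi (kron A B)) (Phi (kron A' B')) -> Q (kron A B) (kron A' B').
Proof.
move=> [hsep [hinj [hsurj haff]]] hA hA' hB hB' [Z1 [Z1' [t [hZ hZ' ht hdec hns]]]].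
have hX := sep1 hA hB; have hY := sep1 hA' hB'.
have h2 : 0 <= (2^-1 : C) <= 1 by rewrite half_ge0 /= -subr_ge0 half1 half_ge0.
have [Z hZs eZ] := hsurj _ hZ; have [Z' hZs' eZ'] := hsurj _ hZ'.
case/andP: (ht) => t0 t1.
exists Z, Z', t; split => //.
- apply: hinj.
  + exact: sep2.
  + by apply: sep_conv => //; rewrite !ltW.
  + have htt : 0 <= t <= 1 by rewrite !ltW.
    by rewrite (haff _ _ _ hX hY h2) hdec -eZ -eZ' (haff _ _ _ hZs hZs' htt).
move=> s hs h; apply: (hns s hs).
by rewrite -eZ h haff.
Qed.
End S.

Unset Implicit Arguments.

Theorem mainTheorem7 (C : numClosedFieldType) (m n m' n' : nat)
    (Phi : 'M[C]_(m * n) -> 'M[C]_(m' * n'))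
    (hPhi : affine_iso_sep Phi)
    (w1 w2 : 'M[C]_m) (s1 s2 : 'M[C]_n)
    (hw1 : pure_state w1) (hw2 : pure_state w2) (hw12 : w1 <> w2)
    (hs1 : pure_state s1) (hs2 : pure_state s2) (hs12 : s1 <> s2) :
  ~ exists (r1 r2 r3 : 'M[C]_m') (t1 t2 t3 : 'M[C]_n'),
      [/\ pure_state r1, pure_state r2 & pure_state r3] /\
      [/\ pure_state t1, pure_state t2 & pure_state t3] /\
      [/\ Phi (kron w1 s1) = kron r1 t1,
          Phi (kron w1 s2) = kron r1 t2,
          Phi (kron w2 s1) = kron r2 t3 &
          Phi (kron w2 s2) = kron r3 t3].
Proof.
move=> [r1 [r2 [r3 [t1 [t2 [t3 [[pr1 pr2 pr3] [[pt1 pt2 pt3] [e1 e2 e3 e4]]]]]]]]].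
have sw1 := hw1.1; have sw2 := hw2.1; have ss1 := hs1.1; have ss2 := hs2.1.
have sr1 := pr1.1; have sr2 := pr2.1; have sr3 := pr3.1.
have st1 := pt1.1; have st2 := pt2.1; have st3 := pt3.1.
have [hsep [hinj [hsurj haff]]] := hPhi.
have QAC : Q (kron r1 t1) (kron r2 t3).
  rewrite -e1 -e3; apply: Q_fwd => //; exact: Qone_l.
have nQAD : ~ Q (kron r1 t1) (kron r3 t3).
  rewrite -e1 -e4 => /(Q_bwd hPhi sw1 sw2 ss1 ss2); exact: Qtwo.
have nQBC : ~ Q (kron r1 t2) (kron r2 t3).
  rewrite -e2 -e3 => /(Q_bwd hPhi sw1 sw2 ss2 ss1); apply: Qtwo => // h; exact: hs12 (esym h).
have [er12|nr12] := eqVneq r1 r2.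
  have [et23|nt23] := eqVneq t2 t3.
    apply: hw12; apply: (kron_injl ss2.2 ss1.2).
    apply: hinj; try exact: sep1.
    by rewrite e2 e3 er12 et23.
  apply: nQBC; rewrite -er12; apply: Qone_r => //; exact/eqP.
have [et13|nt13] := eqVneq t1 t3.
  have [er13|nr13] := eqVneq r1 r3.
    apply: hs12; apply: (kron_injr sw1.2 sw2.2).
    apply: hinj; try exact: sep1.
    by rewrite e1 e4 er13 et13.
  apply: nQAD; rewrite -et13; apply: Qone_l => //; exact/eqP.
by apply: (Qtwo pr1 pr2 (elimN eqP nr12) pt1 pt3 (elimN eqP nt13)).
Qed.
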